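(* Let $c\in(0,1)$ and $C\ge1$ be constants such that for all $n\ge1$, all integers $0\le w\le cn$ and all integers $0\le i\le n/2$, $|K^{(n)}_w(i)|\le C\binom nw(1-\frac{2w}{n})^i$. Let $\mathcal{C}\subseteq\mathbb{F}_2^n$ be a binary linear $[n,k]$ code with $1\le k\le n-1$, generator matrix $G\in\mathbb{F}_2^{k\times n}$ (of rank $k$), and dual distance $d^\perp$; put $t^\perp=\lfloor(d^\perp-1)/2\rfloor$. Let $w$ be a nonnegative integer with $w\le cn$, let $\varepsilon>0$, and let $Z$ be a random vector on $\mathbb{F}_2^n$ with $d_{TV}(P_{GZ},P_{U_k})\le\varepsilon$. Then there exists $e\in\mathbb{F}_2^n$ with $|e|=w$ such that $$|\mathrm{bias}(e^\intercal Z)|\le\sqrt{\frac{|\mathcal{C}^\perp|V_n(t^\perp)}{2^{n+1}}}+\frac{\sqrt{Cn}}{2}\left(1-\frac{2w}{n}\right)^{t^\perp/2}+\sqrt{\frac\varepsilon2}.$$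
   Context: Krawtchouk polynomial: $K^{(n)}_w(i)=\sum_{j=0}^w(-1)^j\binom ij\binom{n-i}{w-j}$. The dual distance $d^\perp$ is the minimum Hamming weight of a nonzero vector of $\mathcal{C}^\perp$. $V_n(t)=\sum_{j=0}^t\binom nj$. For a $\{0,1\}$-valued random variable $\xi$, $\mathrm{bias}(\xi)=\frac12-\Pr(\xi=1)=\frac{\Pr(\xi=0)-\Pr(\xi=1)}{2}$. $P_{GZ}$ is the distribution of $GZ\in\mathbb{F}_2^k$, $P_{U_k}$ the uniform distribution on $\mathbb{F}_2^k$, and $d_{TV}(P,Q)=\frac12\sum_x|P(x)-Q(x)|$. $|e|$ denotes Hamming weight. *)

(* Defs.v *)
From HB Require Import structures.
From mathcomp Require Import all_boot all_order all_algebra.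
From mathcomp Require Import all_classical all_reals all_analysis.
Set Implicit Arguments. Unset Strict Implicit. Unset Printing Implicit Defensive.
Import Order.TTheory GRing.Theory Num.Theory.
Local Open Scope ring_scope.

Definition krawtchouk (R : ringType) (n w i : nat) : R :=
  \sum_(j < w.+1) (-1) ^+ j * ('C(i, j) * 'C(n - i, w - j))%:R.

Definition hweight (n : nat) (x : 'cV['F_2]_n) : nat := #|[set i | x i ord0 != 0]|.

Definition hball_vol (n t : nat) : nat := \sum_(j < t.+1) 'C(n, j).

(* The code C is the row space of G : 'M_(k,n) (codewords m G); its dual is
   C^perp = { y | G y = 0 } (y as a column vector). *)
Definition dual_code (k n : nat) (G : 'M['F_2]_(k, n)) : {set 'cV['F_2]_n} :=
  [set y | G *m y == 0].

(* Dual distance: minimum weight of a nonzero vector of C^perp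
   (default value n if C^perp = 0, which cannot happen when rank G < n). *)
Definition dual_distance (k n : nat) (G : 'M['F_2]_(k, n)) : nat :=
  \big[minn/n]_(y in dual_code G | y != 0) hweight y.

Definition is_pmf (R : numDomainType) (T : finType) (P : T -> R) : Prop :=
  (forall x, 0 <= P x) /\ \sum_x P x = 1.

Definition pushGZ (R : ringType) (k n : nat) (G : 'M['F_2]_(k, n))
  (P : 'cV['F_2]_n -> R) (x : 'cV['F_2]_k) : R :=
  \sum_(z | G *m z == x) P z.

Definition dTV_uniform (R : numFieldType) (k n : nat) (G : 'M['F_2]_(k, n))
  (P : 'cV['F_2]_n -> R) : R :=
  2^-1 * \sum_(x : 'cV['F_2]_k) `|pushGZ G P x - (2 ^+ k)^-1|.

Definition bias_lin (R : numFieldType) (n : nat) (P : 'cV['F_2]_n -> R)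
  (e : 'cV['F_2]_n) : R :=
  2^-1 - \sum_(z | (e^T *m z) ord0 ord0 == 1) P z.

(* Main.v *)
Require Import Defs.
From HB Require Import structures.
From mathcomp Require Import all_boot all_order all_algebra.
From mathcomp Require Import all_classical all_reals all_analysis.
From mathcomp Require Import zify ring lra.
Import Order.TTheory GRing.Theory Num.Theory.
Local Open Scope ring_scope.
Set Implicit Arguments. Unset Strict Implicit. Unset Printing Implicit Defensive.

Lemma F2_cases (a : 'F_2) : a = 0 \/ a = 1.
Proof. case: a => [[|[|m]] H]; [left|right|]; try by apply/val_inj. by []. Qed.

Lemma F2_11 : (1 + 1 : 'F_2) = 0. Proof. by apply: val_inj. Qed.

Definition chi (R : ringType) (b : 'F_2) : R := if b == 0 then 1 else -1.

Lemma chiD (R : ringType) a b : chi R (a + b) = chi R a * chi R b.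
Proof.
by case: (F2_cases a) => ->; case: (F2_cases b) => ->;
  rewrite /chi ?F2_11 ?add0r ?addr0 /= ?mulr1 ?mul1r ?mulrNN ?mulr1 ?oner_eq0.
Qed.

Lemma chi_nat (R : ringType) m : chi R (m%:R) = (-1) ^+ m.
Proof.
elim: m => [|m IH]; first by rewrite /chi eqxx expr0.
by rewrite -[m.+1]add1n natrD chiD IH exprS /chi oner_eq0.
Qed.

Lemma chi1 (R : ringType) b : chi R b = 1 - 2 * (b == 1)%:R.
Proof.
case: (F2_cases b) => ->; rewrite /chi ?eqxx ?oner_eq0 //=.
  by rewrite mulr0 subr0.
by rewrite mulr1 opprD addrA subrr add0r.
Qed.

Definition dotv n (e x : 'cV['F_2]_n) : 'F_2 := (e^T *m x) ord0 ord0.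

Lemma dotvD n (e x y : 'cV['F_2]_n) : dotv e (x + y) = dotv e x + dotv e y.
Proof. by rewrite /dotv mulmxDr mxE. Qed.

Definition supp n (e : 'cV['F_2]_n) : {set 'I_n} := [set i | e i ord0 != 0].
Definition ind n (A : {set 'I_n}) : 'cV['F_2]_n := \col_i (i \in A)%:R.

Lemma indK n (e : 'cV['F_2]_n) : ind (supp e) = e.
Proof.
apply/matrixP => i j; rewrite !mxE inE (ord1 j).
by case: (F2_cases (e i ord0)) => ->; rewrite ?eqxx ?oner_eq0.
Qed.

Lemma suppK n (A : {set 'I_n}) : supp (ind A) = A.
Proof. by apply/setP => i; rewrite !inE mxE; case: (i \in A); rewrite ?eqxx ?oner_eq0. Qed.

Lemma hweight_supp n (e : 'cV['F_2]_n) : hweight e = #|supp e|.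
Proof. by []. Qed.

Lemma sum_w_sets (R : ringType) n w (F : 'cV['F_2]_n -> R) :
  \sum_(e | hweight e == w) F e = \sum_(A : {set 'I_n} | #|A| == w) F (ind A).
Proof.
rewrite (reindex (@ind n)) /=; last by exists (@supp n) => e _; rewrite ?indK ?suppK.
by apply: eq_bigl => A; rewrite hweight_supp suppK.
Qed.

Lemma card_w_R (R : ringType) n w :
  \sum_(e : 'cV['F_2]_n | hweight e == w) (1 : R) = 'C(n, w)%:R.
Proof.
rewrite sum_w_sets sumr_const.
have -> : #|[pred A : {set 'I_n} | #|A| == w]| = 'C(n, w).
  rewrite -[n in 'C(n, _)]card_ord -card_draws; apply: eq_card => A; by rewrite !inE.
done.
Qed.

Lemma dotv_ind n (A S : {set 'I_n}) : dotv (ind A) (ind S) = #|A :&: S|%:R.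
Proof.
rewrite /dotv mxE (bigID (fun i => i \in A :&: S)) /= [X in _ + X]big1 ?addr0.
  rewrite -sum1_card natr_sum; apply: eq_bigr => i; rewrite !mxE inE => /andP[-> ->].
  by rewrite mulr1.
move=> i; rewrite !mxE inE negb_and; case: (i \in A); case: (i \in S) => //=;
  by rewrite ?mulr0 ?mul0r.
Qed.

Lemma splitU (T : finType) (S B1 B2 : {set T}) :
  B1 \subset S -> B2 \subset ~: S ->
  (B1 :|: B2) :&: S = B1 /\ (B1 :|: B2) :\: S = B2.
Proof.
move=> s1 s2; split; apply/setP => x; rewrite !inE;
have h1 := fintype.subsetP s1 x; have h2 := fintype.subsetP s2 x; rewrite inE in h2;
case: (x \in S) h1 h2; case: (x \in B1); case: (x \in B2) => //= h1 h2;
by [ have := h1 isT | have := h2 isT ].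
Qed.

Lemma count_inter (T : finType) (S : {set T}) w j : (j <= w)%N ->
  #|[set A : {set T} | (#|A| == w) && (#|A :&: S| == j)]| =
  ('C(#|S|, j) * 'C(#|~: S|, w - j))%N.
Proof.
move=> jw.
set D1 := [set B : {set T} | B \subset S & #|B| == j].
set D2 := [set B : {set T} | B \subset ~: S & #|B| == (w - j)%N].
have -> : [set A : {set T} | (#|A| == w) && (#|A :&: S| == j)] =
   (fun p : {set T} * {set T} => p.1 :|: p.2) @: finset.setX D1 D2.
  apply/setP => A; rewrite inE; apply/idP/imsetP.
    move=> /andP[/eqP hA /eqP hj]; exists (A :&: S, A :\: S) => /=.
      rewrite !inE subsetIr hj eqxx /=.
      apply/andP; split; first by apply/fintype.subsetP => x; rewrite !inE => /andP[].
      by rewrite -hA -(cardsID S A) hj addKn.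
    by rewrite /= finset.setDE -finset.setIUr finset.setUCr finset.setIT.
  case=> [[B1 B2]]; rewrite !inE /= => /andP[/andP[s1 /eqP c1] /andP[s2 /eqP c2]] ->.
  have [-> _] := splitU s1 s2; rewrite c1 eqxx andbT.
  rewrite cardsU c1 c2 subnKC //.
  have -> : B1 :&: B2 = finset.set0.
    apply/setP => x; rewrite !inE; have h1 := fintype.subsetP s1 x; have h2 := fintype.subsetP s2 x.
    rewrite inE in h2; case: (x \in B1) h1 => // /(_ isT) xs.
    by case: (x \in B2) h2 => // /(_ isT); rewrite xs.
  by rewrite cards0 subn0.
rewrite card_in_imset; last first.
  move=> [B1 B2] [B1' B2']; rewrite !inE /= =>
    /andP[/andP[s1 _] /andP[s2 _]] /andP[/andP[s1' _] /andP[s2' _]] e.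
  have [e1 e2] := splitU s1 s2; have [e1' e2'] := splitU s1' s2'.
  by have := congr1 (fun X => (X :&: S, X :\: S)) e; rewrite /= e1 e2 e1' e2'.
by rewrite cardsX !cards_draws.
Qed.

Lemma kraw_sets (R : ringType) (T : finType) (S : {set T}) w :
  \sum_(A : {set T} | #|A| == w) (-1) ^+ #|A :&: S| =
  \sum_(j < w.+1) (-1) ^+ j * ('C(#|S|, j) * 'C(#|T| - #|S|, w - j))%:R :> R.
Proof.
have cT : (#|T| - #|S| = #|~: S|)%N by rewrite -(cardsC S) addKn.
rewrite cT.
rewrite (partition_big (fun A : {set T} => (inord #|A :&: S| : 'I_w.+1)) xpredT) //=.
apply: eq_bigr => j _.
rewrite -(count_inter S (ltnSE (ltn_ord j))) mulr_natr -sumr_const.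
apply: eq_big => A; rewrite ?inE.
  case: (#|A| =P w) => //= hA.
  have hle : (#|A :&: S| < w.+1)%N by rewrite ltnS -hA subset_leq_card // finset.subsetIl.
  apply/eqP/eqP => [<-|e]; first by rewrite inordK.
  by apply/val_inj; rewrite /= inordK.
move=> /andP[/eqP hA /eqP <-]; rewrite inordK //.
by rewrite ltnS -hA subset_leq_card // finset.subsetIl.
Qed.

Lemma expr_mono_le1 (R : numDomainType) (b : R) m t : 0 <= b -> b <= 1 -> (t <= m)%N -> b ^+ m <= b ^+ t.
Proof.
move=> b0 b1 tm; rewrite -(subnKC tm) exprD.
by apply: ler_piMr; [exact: exprn_ge0 | exact: exprn_ile1].
Qed.

Definition onesv n : 'cV['F_2]_n := ind (finset.setTfor 'I_n).

Definition Kc (R : ringType) n w (x : 'cV['F_2]_n) : R :=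
  \sum_(e : 'cV['F_2]_n | hweight e == w) chi R (dotv e x).

Lemma Kc_kraw (R : ringType) n w (x : 'cV['F_2]_n) : Kc R w x = krawtchouk R n w (hweight x).
Proof.
rewrite /Kc sum_w_sets hweight_supp.
rewrite (eq_bigr (fun A => (-1) ^+ #|A :&: supp x|)); last first.
  by move=> A _; rewrite -{1}[x]indK dotv_ind chi_nat.
by rewrite kraw_sets card_ord.
Qed.

Lemma Kc_abs (R : realType) n w (x : 'cV['F_2]_n) : `|Kc R w x| <= 'C(n, w)%:R.
Proof.
rewrite -card_w_R; apply: le_trans (ler_norm_sum _ _ _) _.
by apply: ler_sum => e _; rewrite /chi; case: ifP; rewrite ?normrN normr1.
Qed.

Lemma Kc_compl (R : comRingType) n w (x : 'cV['F_2]_n) :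
  Kc R w (x + onesv n) = (-1) ^+ w * Kc R w x.
Proof.
rewrite /Kc mulr_sumr; apply: eq_bigr => e /eqP hw.
rewrite dotvD chiD mulrC; congr (_ * _).
by rewrite /onesv -[e]indK dotv_ind finset.setIT chi_nat -hweight_supp hw.
Qed.

Lemma hw_compl n (x : 'cV['F_2]_n) : hweight (x + onesv n) = (n - hweight x)%N.
Proof.
rewrite !hweight_supp.
have -> : supp (x + onesv n) = ~: supp x.
  apply/setP => i; rewrite !inE /onesv !mxE !inE.
  by case: (F2_cases (x i ord0)) => ->; rewrite ?add0r ?F2_11 ?eqxx ?oner_eq0.
by have := cardsC (supp x); rewrite card_ord; lia.
Qed.

Lemma Kc_point (R : realType) (C b : R) n w t (x : 'cV['F_2]_n) :
  0 <= C -> 0 <= b -> b <= 1 ->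
  (forall i, (i * 2 <= n)%N -> `|krawtchouk R n w i| <= C * 'C(n, w)%:R * b ^+ i) ->
  `|Kc R w x| <= 'C(n, w)%:R *
     ((hweight x <= t)%N%:R + (hweight (x + onesv n) <= t)%N%:R + C * b ^+ t).
Proof.
move=> C0 b0 b1 hK.
have Cb : 0 <= C * b ^+ t by rewrite mulr_ge0 // exprn_ge0.
have Bn : 0 <= 'C(n, w)%:R :> R by [].
case: (leqP (hweight x) t) => h1.
  apply: le_trans; first exact: Kc_abs. rewrite -{1}[_%:R]mulr1 ler_wpM2l //.
  by rewrite -addrA lerDl addr_ge0.
case: (leqP (hweight (x + onesv n)) t) => h2.
  apply: le_trans; first exact: Kc_abs. rewrite -{1}[_%:R]mulr1 ler_wpM2l //.
  by rewrite add0r lerDl.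
rewrite add0r add0r mulrCA mulrA.
have hc := hw_compl x.
case: (leqP (hweight x * 2) n) => h3.
  rewrite Kc_kraw; apply: le_trans (hK _ h3) _.
  apply: ler_wpM2l; first by rewrite mulr_ge0.
  by apply: expr_mono_le1 => //; apply: ltnW.
have -> : `|Kc R w x| = `|Kc R w (x + onesv n)|.
  by rewrite Kc_compl normrM normrX normrN normr1 expr1n mul1r.
rewrite Kc_kraw; apply: le_trans (hK _ _) _; first by rewrite hc; lia.
apply: ler_wpM2l; first by rewrite mulr_ge0.
by apply: expr_mono_le1 => //; apply: ltnW.
Qed.

Lemma hball_R (R : ringType) n t :
  \sum_(x : 'cV['F_2]_n | (hweight x <= t)%N) (1 : R) = (hball_vol n t)%:R.
Proof.
rewrite /hball_vol natr_sum.
rewrite (partition_big (fun x : 'cV['F_2]_n => (inord (hweight x) : 'I_t.+1)) xpredT) //=.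
apply: eq_bigr => j _; rewrite -card_w_R; apply: eq_bigl => x.
case: (leqP (hweight x) t) => h /=.
  apply/eqP/eqP => [<-|e]; first by rewrite inordK.
  by apply/val_inj; rewrite /= inordK.
apply/esym/eqP => e; move: (ltn_ord j); rewrite -e; lia.
Qed.

Lemma ball_card n t (a : 'cV['F_2]_n) :
  (#|[set y : 'cV['F_2]_n | (hweight (a + y) <= t)%N]| <= hball_vol n t)%N.
Proof.
have -> : [set y : 'cV['F_2]_n | (hweight (a + y) <= t)%N] =
    (fun x => x - a) @: [set x : 'cV['F_2]_n | (hweight x <= t)%N].
  apply/setP => y; rewrite inE; apply/idP/imsetP => [h|[x]].
    by exists (a + y); rewrite ?inE // addrC addKr.
  by rewrite inE => h ->; rewrite addrC subrK.
apply: leq_trans (leq_imset_card _ _) _.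
rewrite -(ler_nat int) -hball_R -sum1_card natr_sum.
by under eq_bigl do rewrite inE.
Qed.

Lemma card_cV k : #|{: 'cV['F_2]_k}| = (2 ^ k)%N.
Proof. by rewrite card_mx card_Fp // muln1. Qed.

Lemma push_sum1 (R : realType) k n (G : 'M['F_2]_(k, n)) (P : 'cV['F_2]_n -> R) :
  is_pmf P -> \sum_x pushGZ G P x = 1.
Proof.
case=> _ <-; rewrite (partition_big (fun z => G *m z) xpredT) //=.
Qed.

Lemma ball_prob (R : realType) k n (G : 'M['F_2]_(k, n)) (P : 'cV['F_2]_n -> R) eps t a :
  is_pmf P -> dTV_uniform G P <= eps ->
  \sum_(y | (hweight (a + y) <= t)%N) P y <= (hball_vol n t)%:R / 2 ^+ k + eps.
Proof.
move=> hP hTV; have P0 := hP.1.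
set B := [set y : 'cV['F_2]_n | (hweight (a + y) <= t)%N].
set X := (fun y => G *m y) @: B.
set q := (2 ^+ k)^-1 : R.
have -> : \sum_(y | (hweight (a + y) <= t)%N) P y = \sum_(y in B) P y.
  by apply: eq_bigl => y; rewrite inE.
rewrite (partition_big_imset (fun y => G *m y)) /= -/X.
have step1 : \sum_(j in X) \sum_(i in B | G *m i == j) P i <= \sum_(j in X) pushGZ G P j.
  apply: ler_sum => x _; rewrite /pushGZ [X in X <= _]big_mkcond [X in _ <= X]big_mkcond /=.
  by apply: ler_sum => y _; case: (y \in B); case: (G *m y == x) => //=.
apply: le_trans step1 _.
set d := fun x => pushGZ G P x - q.
set pp := fun x => (`|d x| + d x) / 2.
have dle : forall x, d x <= pp x.
  move=> x; rewrite /pp ler_pdivlMr // mulr_natr mulr2n lerD2r; exact: ler_norm.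
have posp : forall r : R, 0 <= `|r| + r.
  move=> r; case: (lerP 0 r) => h; first by rewrite ger0_norm // addr_ge0.
  by rewrite ltr0_norm // addNr.
have pp0 : forall x, 0 <= pp x by move=> x; rewrite /pp divr_ge0.
have sumq : \sum_(x : 'cV['F_2]_k) q = 1.
  rewrite sumr_const card_cV -mulr_natr natrX /q mulVf //.
have sumpp : \sum_x pp x = dTV_uniform G P.
  rewrite /pp -mulr_suml big_split /= /d sumrB push_sum1 // sumq subrr addr0.
  by rewrite /dTV_uniform mulrC.
have -> : \sum_(j in X) pushGZ G P j = \sum_(j in X) (q + d j).
  by apply: eq_bigr => j _; rewrite /d addrC subrK.
rewrite big_split /= sumr_const.
apply: lerD.
  rewrite /q -[_ *+ #|X|]mulr_natl; apply: ler_wpM2r; first by rewrite invr_ge0 exprn_ge0.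
  rewrite ler_nat; apply: leq_trans (leq_imset_card _ _) _; exact: ball_card.
apply: le_trans hTV; rewrite -sumpp.
apply: le_trans (_ : \sum_(j in X) pp j <= _).
  by apply: ler_sum => j _; exact: dle.
rewrite [X in _ <= X](bigID (fun j => j \in X)) /= lerDl.
by apply: sumr_ge0 => j _.
Qed.

Lemma dual_count k n (G : 'M['F_2]_(k, n)) : (2 ^ n <= #|dual_code G| * 2 ^ k)%N.
Proof.
have e : #|{: 'cV['F_2]_n}| = (\sum_(x : 'cV['F_2]_k) #|[pred z | G *m z == x]|)%N.
  rewrite -sum1_card (partition_big (fun z => G *m z) xpredT) //=.
  by apply: eq_bigr => x _; rewrite sum1_card.
rewrite -card_cV e mulnC.
have -> : (2 ^ k * #|dual_code G| = \sum_(x : 'cV['F_2]_k) #|dual_code G|)%N.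
  by rewrite sum_nat_const card_cV.
apply: leq_sum => x _.
case: (pickP (fun z => G *m z == x)) => [z0 hz0 | none]; last first.
  rewrite (@eq_card0 _ [pred z | G *m z == x]) // => z; rewrite !inE /=; exact: none.
have -> : #|[pred z | G *m z == x]| = #|(fun z => z - z0) @: [set z | G *m z == x]|.
  rewrite card_imset; last by move=> u v /addIr.
  by apply: eq_card => z; rewrite !inE.
apply: subset_leq_card; apply/fintype.subsetP => y /imsetP[z]; rewrite !inE => /eqP hz ->.
by rewrite mulmxBr hz (eqP hz0) subrr.
Qed.

Definition hat (R : ringType) n (P : 'cV['F_2]_n -> R) (e : 'cV['F_2]_n) : R :=
  \sum_z P z * chi R (dotv e z).

Lemma bias_hat (R : realType) n (P : 'cV['F_2]_n -> R) e :
  is_pmf P -> bias_lin P e = hat P e / 2.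
Proof.
case=> _ P1; rewrite /bias_lin /hat.
have -> : \sum_z P z * chi R (dotv e z) = \sum_z P z - 2 * \sum_(z | dotv e z == 1) P z.
  rewrite mulr_sumr [X in _ - X]big_mkcond -sumrB; apply: eq_bigr => z _.
  rewrite chi1 mulrBr mulr1; congr (_ - _).
  by case: (dotv e z == 1) => /=; rewrite ?mulr1 ?mulr0 ?mul0r // mulrC.
rewrite P1 mulrBl mul1r mulrC mulrA mulVf ?pnatr_eq0 // mul1r.
done.
Qed.

Lemma sum_hat2 (R : realType) n w (P : 'cV['F_2]_n -> R) :
  \sum_(e | hweight e == w) hat P e ^+ 2 =
  \sum_z \sum_z' P z * P z' * Kc R w (z + z').
Proof.
transitivity (\sum_(e | hweight e == w) \sum_z \sum_z' P z * P z' * chi R (dotv e (z + z'))).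
  apply: eq_bigr => e _; rewrite expr2 /hat mulr_suml; apply: eq_bigr => z _.
  rewrite mulr_sumr; apply: eq_bigr => z' _.
  by rewrite dotvD chiD; rewrite -!mulrA; congr (_ * _); rewrite mulrCA.
rewrite exchange_big /=; apply: eq_bigr => z _.
rewrite exchange_big /=; apply: eq_bigr => z' _.
by rewrite /Kc mulr_sumr.
Qed.

Lemma avg_exists (R : realType) (T : finType) (Q : pred T) (F : T -> R) M :
  0 < \sum_(e | Q e) (1 : R) -> \sum_(e | Q e) F e <= (\sum_(e | Q e) (1 : R)) * M ->
  exists e, Q e /\ F e <= M.
Proof.
move=> pos hs.
case: (pickP (fun e => Q e && (F e <= M))) => [e /andP[h1 h2] | none]; first by exists e.
exfalso.
have ne : has Q (index_enum T).
  apply/hasP; case: (pickP Q) => [e qe | nq]; first by exists e; rewrite ?mem_index_enum.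
  by move: pos; rewrite big_pred0 // ltxx.
have : \sum_(e | Q e) (1 * M) < \sum_(e | Q e) F e.
  apply: ltr_sum => // e qe; move: (none e); rewrite qe /=.
  by rewrite mul1r => /negbT; rewrite -ltNge.
by rewrite -mulr_suml ltNge hs.
Qed.

Lemma sqrt_half_le (R : realType) (X Y : R) : 0 <= Y -> X <= 4 * Y ->
  Num.sqrt X / 2 <= Num.sqrt Y.
Proof.
move=> Y0 h; rewrite ler_pdivrMr // mulrC.
have -> : (2 : R) = Num.sqrt 4.
  have h4 : (4 : R) = 2 ^+ 2 by rewrite expr2 -natrM.
  by rewrite h4 sqrtr_sqr ger0_norm.
rewrite -sqrtrM // ler_sqrt // mulr_ge0 //.
Qed.

Lemma sqrtD_le (R : realType) (a b : R) : 0 <= a -> 0 <= b ->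
  Num.sqrt (a + b) <= Num.sqrt a + Num.sqrt b.
Proof.
move=> a0 b0.
rewrite -(ger0_norm (addr_ge0 (sqrtr_ge0 a) (sqrtr_ge0 b))) -sqrtr_sqr ler_sqrt ?sqrrD ?sqr_sqrtr //.
  by rewrite lerD2r lerDl mulrn_wge0 // mulr_ge0 // sqrtr_ge0.
by rewrite !addr_ge0 // mulrn_wge0 // mulr_ge0 // sqrtr_ge0.
Qed.

Lemma sum_ind (R : ringType) (T : finType) (F : T -> R) (Q : pred T) :
  \sum_x F x * (Q x)%:R = \sum_(x | Q x) F x.
Proof. by rewrite [RHS]big_mkcond; apply: eq_bigr => x _; case: (Q x); rewrite ?mulr1 ?mulr0. Qed.

Unset Implicit Arguments.

Theorem mainTheorem4 (R : realType) (c C : R)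
  (hc0 : 0 < c) (hc1 : c < 1) (hC : 1 <= C)
  (hK : forall (n w i : nat), (1 <= n)%N -> w%:R <= c * n%:R -> (i * 2 <= n)%N ->
     `|krawtchouk R n w i| <= C * 'C(n, w)%:R * (1 - 2 * w%:R / n%:R) ^+ i)
  (n k : nat) (G : 'M['F_2]_(k, n))
  (hk1 : (1 <= k)%N) (hkn : (k <= n - 1)%N) (hrank : \rank G = k)
  (w : nat) (hw : w%:R <= c * n%:R)
  (eps : R) (heps : 0 < eps)
  (P : 'cV['F_2]_n -> R) (hP : is_pmf P)
  (hTV : dTV_uniform G P <= eps) :
  let tp := ((dual_distance G).-1)./2 in
  exists e : 'cV['F_2]_n, hweight e = w /\
    `|bias_lin P e| <=
      Num.sqrt (#|dual_code G|%:R * (hball_vol n tp)%:R / 2 ^+ n.+1)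
      + Num.sqrt (C * n%:R) / 2 * powR (1 - 2 * w%:R / n%:R) (tp%:R / 2)
      + Num.sqrt (eps / 2).
Proof.
move=> t.
have n2 : (2 <= n)%N by lia.
have n0 : 0 < n%:R :> R by rewrite ltr0n (ltnW n2).
have wn : (w <= n)%N.
  have : w%:R < n%:R :> R.
    by apply: le_lt_trans hw _; rewrite -[X in _ < X]mul1r ltr_pM2r.
  by rewrite ltr_nat => /ltnW.
have C0 : 0 <= C by apply: le_trans hC.
have P0 := hP.1; have P1 := hP.2.
have binpos : 0 < 'C(n, w)%:R :> R by rewrite ltr0n bin_gt0.
have sumQ := card_w_R R n w.
set b := 1 - 2 * w%:R / n%:R.
case: (ltrP b 0) => hb.
  have [e [/eqP he _]] : exists e : 'cV['F_2]_n, hweight e == w /\ (fun _ => 0 : R) e <= 0.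
    apply: avg_exists; rewrite sumQ // big1 // mulr0.
  exists e; split => //.
  rewrite lt0_powR1 // mulr1.
  set S := \sum_(z | (e^T *m z) ord0 ord0 == 1) P z.
  have S0 : 0 <= S by apply: sumr_ge0.
  have S1 : S <= 1.
    rewrite -P1 /S big_mkcond; apply: ler_sum => z _; case: ifP => // _.
  have hb1 : `|bias_lin P e| <= 2^-1.
    rewrite /bias_lin -/S ler_norml; apply/andP; split; lra.
  apply: le_trans hb1 _.
  have h1 : 1 <= Num.sqrt (C * n%:R).
    have Cn1 : 1 <= C * n%:R by rewrite -{1}[1]mulr1 ler_pM // ler1n (ltnW n2).
    by rewrite -{1}(sqrtr1 R) ler_sqrt // mulr_ge0.
  have s1 := sqrtr_ge0 (#|dual_code G|%:R * (hball_vol n t)%:R / 2 ^+ n.+1 : R).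
  have s2 := sqrtr_ge0 (eps / 2).
  lra.
have b1 : b <= 1.
  rewrite /b lerBlDr lerDl; apply: divr_ge0 => //; rewrite mulr_ge0 //.
have hK' : forall i, (i * 2 <= n)%N -> `|krawtchouk R n w i| <= C * 'C(n, w)%:R * b ^+ i.
  by move=> i hi; apply: hK => //; exact: ltnW n2.
set V := (hball_vol n t)%:R : R.
set M0 := 2 * (V / 2 ^+ k + eps) + C * b ^+ t.
have inner : forall z, \sum_z' P z' * `|Kc R w (z + z')| <= 'C(n, w)%:R * M0.
  move=> z.
  apply: le_trans (_ : \sum_z' P z' * ('C(n, w)%:R * ((hweight (z + z') <= t)%N%:R
        + (hweight (z + z' + onesv n) <= t)%N%:R + C * b ^+ t)) <= _).
    by apply: ler_sum => z' _; apply: ler_wpM2l; [exact: P0 | apply: Kc_point].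
  under eq_bigr do rewrite mulrCA.
  rewrite -mulr_sumr; apply: ler_wpM2l; first exact: ltW.
  under eq_bigr do rewrite !mulrDr.
  rewrite !big_split /=.
  rewrite (sum_ind P (fun i => (hweight (z + i) <= t)%N)).
  rewrite (sum_ind P (fun i => (hweight (z + i + onesv n) <= t)%N)).
  rewrite -mulr_suml P1 mul1r /M0.
  have B1 := ball_prob t z hP hTV.
  have B2 := ball_prob t (z + onesv n) hP hTV.
  have -> : \sum_(x | (hweight (z + x + onesv n) <= t)%N) P x =
            \sum_(x | (hweight (z + onesv n + x) <= t)%N) P x.
    by apply: eq_bigl => x; rewrite addrAC.
  rewrite -/V in B1 B2; apply: lerD => //; rewrite mulr_natl mulr2n; exact: lerD.
have total : \sum_(e | hweight e == w) hat P e ^+ 2 <= (\sum_(e : 'cV['F_2]_n | hweight e == w) (1 : R)) * M0.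
  rewrite (sum_hat2 w P) sumQ.
  apply: le_trans (_ : \sum_z P z * ('C(n, w)%:R * M0) <= _); last first.
    by rewrite -mulr_suml P1 mul1r.
  apply: ler_sum => z _.
  apply: le_trans (_ : \sum_z' P z * (P z' * `|Kc R w (z + z')|) <= _).
    apply: ler_sum => z' _; rewrite -mulrA; apply: ler_wpM2l; first exact: P0.
    by apply: ler_wpM2l; [exact: P0 | apply: ler_norm].
  by rewrite -mulr_sumr; apply: ler_wpM2l; [exact: P0 | exact: inner].
have pos : 0 < \sum_(e : 'cV['F_2]_n | hweight e == w) (1 : R) by rewrite sumQ.
have [e [/eqP he hle]] := avg_exists pos total.
exists e; split => //.
have V0 : 0 <= V by [].
have k0 : 0 < 2 ^+ k :> R by rewrite exprn_gt0.
have bt0 : 0 <= b ^+ t by rewrite exprn_ge0.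
set X := 2 * V / 2 ^+ k.
set Y := 2 * eps.
set Z := C * b ^+ t.
have X0 : 0 <= X by rewrite /X divr_ge0 ?mulr_ge0 // ltW.
have Y0 : 0 <= Y by rewrite /Y mulr_ge0 // ltW.
have Z0 : 0 <= Z by rewrite /Z mulr_ge0.
have eM : M0 = X + Z + Y by rewrite /M0 /X /Y /Z mulrDr mulrA addrAC.
have hs : `|hat P e| <= Num.sqrt X + Num.sqrt Z + Num.sqrt Y.
  rewrite -sqrtr_sqr; apply: le_trans (_ : Num.sqrt M0 <= _).
    by rewrite ler_sqrt // eM !addr_ge0.
  rewrite eM; apply: le_trans (sqrtD_le _ _) _ => //; first by rewrite addr_ge0.
  by rewrite lerD2r; apply: sqrtD_le.
rewrite bias_hat // normrM [`|2^-1|]ger0_norm ?invr_ge0 //.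
apply: le_trans (_ : (Num.sqrt X + Num.sqrt Z + Num.sqrt Y) / 2 <= _).
  by apply: ler_wpM2r; rewrite ?invr_ge0.
rewrite !mulrDl; apply: lerD; first apply: lerD.
- apply: sqrt_half_le; first by rewrite !mulr_ge0 // invr_ge0 exprn_ge0.
  have key : 2 ^+ n <= #|dual_code G|%:R * 2 ^+ k :> R.
    by rewrite -!natrX -natrM ler_nat dual_count.
  have n0' : 2 ^+ n != 0 :> R by rewrite expf_neq0.
  have k0' : 2 ^+ k != 0 :> R by rewrite expf_neq0.
  have -> : X = (2 * V / (2 ^+ k * 2 ^+ n)) * 2 ^+ n.
    by rewrite /X; field; rewrite n0' k0'.
  have -> : 4 * (#|dual_code G|%:R * V / 2 ^+ n.+1) =
            (2 * V / (2 ^+ k * 2 ^+ n)) * (#|dual_code G|%:R * 2 ^+ k).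
    by rewrite exprS; field; rewrite n0' k0'.
  by apply: ler_wpM2l => //; rewrite divr_ge0 ?mulr_ge0 // ltW // mulr_gt0 // exprn_gt0.
- have hp : b `^ (t%:R / 2) = Num.sqrt (b ^+ t).
    by rewrite powRrM powR_mulrn // powR12_sqrt.
  rewrite hp /Z sqrtrM // mulrAC; apply: ler_wpM2r; first exact: sqrtr_ge0.
  apply: ler_wpM2r; first by rewrite invr_ge0.
  by rewrite ler_sqrt ?mulr_ge0 //; rewrite -{1}[C]mulr1 ler_wpM2l // ler1n (ltnW n2).
- apply: sqrt_half_le; first by rewrite divr_ge0 // ltW.
  rewrite /Y; have -> : 4 * (eps / 2) = 2 * eps :> R.
    by field.
  done.
Qed.
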